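(* Let $s$ be an integer with $|s|\ge 10^5$ such that $3s^2-4s+4$ is a perfect square and $s^2+2$ is squarefree. Let $r_1,r_2,r_3,r_4$ be the roots of $F_s(t)= t^4 + (4s^3 - 4s^2 + 8s - 4)t^3 + (-6s^2 - 6)t^2 + 4t + 1$, labeled so that the generator $\sigma$ of the cyclic Galois group of the splitting field satisfies $\sigma(r_j)=r_{j+1}$ (indices mod 4) and $r_1\approx -4s^3$ is the root of largest absolute value. Let $$R'=\left|\det\begin{pmatrix}\log|r_1|&\log|r_2|&\log|r_3|\\ \log|r_2|&\log|r_3|&\log|r_4|\\ \log|r_3|&\log|r_4|&\log|r_1|\end{pmatrix}\right|$$ and $\epsilon=s^2+1+|s|\sqrt{s^2+2}$. Then $$R'=\tfrac14\left(\log^2|r_1/r_3|+\log^2|r_2/r_4|\right)(2\log\epsilon)\quad\text{and}\quad \frac{R'}{\log\epsilon}<9\log^2|s|.$$ *)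

(* Defs.v *)
From Stdlib Require Import Reals ZArith List.
Open Scope R_scope.

(* Multivariate polynomial expressions with integer coefficients
   (equivalently, up to scaling, rational coefficients) in the variables
   X_0, X_1, ... *)
Inductive zpoly : Type :=
| PConst : Z -> zpoly
| PVar : nat -> zpoly
| PAdd : zpoly -> zpoly -> zpoly
| PMul : zpoly -> zpoly -> zpoly
| PNeg : zpoly -> zpoly.

Fixpoint zpoly_eval (env : list R) (p : zpoly) : R :=
  match p with
  | PConst z => IZR z
  | PVar i => nth i env 0
  | PAdd p q => zpoly_eval env p + zpoly_eval env q
  | PMul p q => zpoly_eval env p * zpoly_eval env q
  | PNeg p => - zpoly_eval env p
  end.

(* Galois' definition of the Galois group of a polynomial as a group of
   permutations of its roots: the relabeling [r1;r2;r3;r4] |-> [r2;r3;r4;r1]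
   (i.e. r_j |-> r_(j+1), indices mod 4) is induced by an element of the
   Galois group iff it preserves every polynomial relation over Q among the
   roots. *)
Definition cyclic_shift_is_galois (r1 r2 r3 r4 : R) : Prop :=
  forall P : zpoly,
    zpoly_eval (r1 :: r2 :: r3 :: r4 :: nil) P = 0 ->
    zpoly_eval (r2 :: r3 :: r4 :: r1 :: nil) P = 0.

Definition Fs (s : Z) (t : R) : R :=
  t ^ 4 + IZR (4 * s ^ 3 - 4 * s ^ 2 + 8 * s - 4) * t ^ 3
  + IZR (- 6 * s ^ 2 - 6) * t ^ 2 + 4 * t + 1.

Definition is_perfect_square (n : Z) : Prop := exists k : Z, n = (k * k)%Z.

Definition squarefree (n : Z) : Prop :=
  forall d : Z, (d * d | n)%Z -> Z.abs d = 1%Z.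

Definition det3 (a b c d e f g h i : R) : R :=
  a * (e * i - f * h) - b * (d * i - f * g) + c * (d * h - e * g).

(* Main.v *)
Require Import Defs.
From Stdlib Require Import Reals ZArith List.
From Stdlib Require Import Lra Lia Psatz.
Open Scope R_scope.

Lemma vieta (A B r1 r2 r3 r4 : R) :
  (forall t, t^4 + A*t^3 + B*t^2 + 4*t + 1 = (t-r1)*(t-r2)*(t-r3)*(t-r4)) ->
  r1+r2+r3+r4 = -A /\ r1*r2+r1*r3+r1*r4+r2*r3+r2*r4+r3*r4 = B /\
  r1*r2*r3+r1*r2*r4+r1*r3*r4+r2*r3*r4 = -4 /\ r1*r2*r3*r4 = 1.
Proof.
  intros H.
  assert (E : forall t, (t-r1)*(t-r2)*(t-r3)*(t-r4) =
    t^4 - (r1+r2+r3+r4)*t^3 + (r1*r2+r1*r3+r1*r4+r2*r3+r2*r4+r3*r4)*t^2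
    - (r1*r2*r3+r1*r2*r4+r1*r3*r4+r2*r3*r4)*t + r1*r2*r3*r4) by (intros; ring).
  generalize (H 0) (H 1) (H (-1)) (H 2); rewrite !E.
  generalize (r1+r2+r3+r4) (r1*r2+r1*r3+r1*r4+r2*r3+r2*r4+r3*r4)
    (r1*r2*r3+r1*r2*r4+r1*r3*r4+r2*r3*r4) (r1*r2*r3*r4).
  intros e1 e2 e3 e4 H0 H1 H2 H3. simpl in *. lra.
Qed.


Lemma det_id l1 l2 l3 l4 : l1+l2+l3+l4 = 0 ->
  det3 l1 l2 l3 l2 l3 l4 l3 l4 l1 = - (/4 * ((l1-l3)^2 + (l2-l4)^2) * (2*(l1+l3))).
Proof.
  intros H. replace l4 with (-l1-l2-l3) by lra. unfold det3. field.
Qed.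

Lemma ln_le' x y : 0 < x -> x <= y -> ln x <= ln y.
Proof. intros Hx Hxy. destruct Hxy as [H|H]. left; apply ln_increasing; auto. subst; lra. Qed.

Lemma root_bounds S T A B r : T >= 100000 -> (S = T \/ S = -T) ->
  A = 4*S^3 - 4*S^2 + 8*S - 4 -> B = -6*S^2 - 6 ->
  r^4 + A*r^3 + B*r^2 + 4*r + 1 = 0 ->
  1/(5*T) <= Rabs r <= 41/10 * T^3.
Proof.
  intros hT hST hA hB hr.
  assert (hAb : Rabs A <= 4*T^3 + 4*T^2 + 8*T + 4).
  { apply Rabs_le; destruct hST; subst; split; nra. }
  assert (hBb : Rabs B <= 6*T^2 + 6).
  { apply Rabs_le; destruct hST; subst; split; nra. }
  set (p := Rabs r).
  assert (hp : 0 <= p) by apply Rabs_pos.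
  assert (key : Rabs (r^4 + A*r^3 + B*r^2 + 4*r) = 1).
  { replace (r^4 + A*r^3 + B*r^2 + 4*r) with (-1) by lra. unfold Rabs; destruct Rcase_abs; lra. }
  assert (tri : Rabs (r^4 + A*r^3 + B*r^2 + 4*r) <= p^4 + Rabs A * p^3 + Rabs B * p^2 + 4*p).
  { unfold p. rewrite !RPow_abs.
    eapply Rle_trans. apply Rabs_triang.
    eapply Rle_trans. apply Rplus_le_compat_r. apply Rabs_triang.
    eapply Rle_trans. apply Rplus_le_compat_r. apply Rplus_le_compat_r. apply Rabs_triang.
    rewrite !Rabs_mult. rewrite (Rabs_right 4) by lra. lra. }
  rewrite key in tri.
  split.
  - destruct (Rle_lt_dec (1/(5*T)) p) as [h|h]; auto. exfalso.
    assert (hx : T * p < 1/5).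
    { apply (Rmult_lt_compat_l T) in h; [|lra]. replace (T * (1/(5*T))) with (1/5) in h by (field; lra). lra. }
    assert (hp1 : p < 1/100) by nra.
    assert (h3 : Rabs A * p^3 <= 5 * (T*p)^3).
    { apply Rle_trans with ((4*T^3 + 4*T^2 + 8*T + 4) * p^3).
      apply Rmult_le_compat_r; [apply pow_le; auto| auto].
      assert (0 <= p^3) by (apply pow_le; auto).
      replace (5*(T*p)^3) with (5*T^3*p^3) by ring. apply Rmult_le_compat_r; auto. nra. }
    assert (h2 : Rabs B * p^2 <= 7 * (T*p)^2).
    { apply Rle_trans with ((6*T^2 + 6) * p^2).
      apply Rmult_le_compat_r; [apply pow_le; auto| auto].
      assert (0 <= p^2) by (apply pow_le; auto).
      replace (7*(T*p)^2) with (7*T^2*p^2) by ring. apply Rmult_le_compat_r; auto. nra. }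
    assert (0 <= T*p) by nra.
    assert ((T*p)^2 <= 1/25).
    { replace ((T*p)^2) with ((T*p)*(T*p)) by ring. assert ((T*p)*(T*p) <= (T*p)*(1/5)) by (apply Rmult_le_compat_l; lra). lra. }
    assert ((T*p)^3 <= 1/125).
    { replace ((T*p)^3) with ((T*p)^2*(T*p)) by ring. assert ((T*p)^2*(T*p) <= (1/25)*(T*p)) by (apply Rmult_le_compat_r; lra). lra. }
    assert (p^4 <= 1/100) by (simpl; nra).
    lra.
  - destruct (Rle_lt_dec p (41/10 * T^3)) as [h|h]; auto. exfalso.
    assert (hT3 : 10*T^2 + 8*T + 15 <= 1/10 * T^3) by nra.
    assert (hp1 : 1 <= p) by nra.
    assert (hp3 : 0 < p^3) by (apply pow_lt; lra).
    assert (p^4 <= (Rabs A + Rabs B + 5) * p^3).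
    { assert (p^4 <= Rabs A * p^3 + Rabs B * p^2 + 4*p + 1).
      { unfold p. rewrite RPow_abs. replace (r^4) with (-(A*r^3 + B*r^2 + 4*r + 1)) by lra.
        rewrite Rabs_Ropp, !RPow_abs.
        eapply Rle_trans. apply Rabs_triang.
        eapply Rle_trans. apply Rplus_le_compat_r. apply Rabs_triang.
        eapply Rle_trans. apply Rplus_le_compat_r. apply Rplus_le_compat_r. apply Rabs_triang.
        rewrite !Rabs_mult. rewrite (Rabs_right 4) by lra. rewrite Rabs_R1. lra. }
      assert (Rabs B * p^2 <= Rabs B * p^3). { apply Rmult_le_compat_l. apply Rabs_pos. simpl; nra. }
      assert (4*p + 2 <= 6*p^3) by (simpl; nra).
      nra. }
    assert (p^4 <= 41/10*T^3 * p^3) by nra.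
    replace (p^4) with (p * p^3) in H by ring.
    apply Rmult_le_reg_r in H; auto. lra.
Qed.

Lemma galois_step (c0 : Z) (A B r1 r2 r3 r4 : R) :
  cyclic_shift_is_galois r1 r2 r3 r4 ->
  r1+r2+r3+r4 = -A -> r1*r2+r1*r3+r1*r4+r2*r3+r2*r4+r3*r4 = B ->
  r1*r2*r3+r1*r2*r4+r1*r3*r4+r2*r3*r4 = -4 -> r1*r2*r3*r4 = 1 ->
  IZR c0^3 - B*IZR c0^2 + (4*A - 4)*IZR c0 - (A^2 + 16 - 4*B) = 0 ->
  IZR c0^2 + 2*IZR c0*(B - 2*IZR c0) <> 4*A - 4 ->
  r1*r3 + r2*r4 = IZR c0.
Proof.
  intros hgal v1 v2 v3 v4 hcub hne.
  set (c := IZR c0) in *.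
  assert (Hid : (c - (r1*r2+r3*r4))*(c - (r1*r3+r2*r4))*(c - (r1*r4+r2*r3)) =
    c^3 - (r1*r2+r1*r3+r1*r4+r2*r3+r2*r4+r3*r4)*c^2
    + ((r1+r2+r3+r4)*(r1*r2*r3+r1*r2*r4+r1*r3*r4+r2*r3*r4) - 4*(r1*r2*r3*r4))*c
    - ((r1+r2+r3+r4)^2*(r1*r2*r3*r4) + (r1*r2*r3+r1*r2*r4+r1*r3*r4+r2*r3*r4)^2
       - 4*(r1*r2+r1*r3+r1*r4+r2*r3+r2*r4+r3*r4)*(r1*r2*r3*r4))) by ring.
  rewrite v1, v2, v3, v4 in Hid.
  assert (Hz : (c - (r1*r2+r3*r4))*(c - (r1*r3+r2*r4))*(c - (r1*r4+r2*r3)) = 0).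
  { rewrite Hid, <- hcub. ring. }
  assert (Hsum : (r1*r2+r3*r4) + (r1*r3+r2*r4) + (r1*r4+r2*r3) = B) by (rewrite <- v2; ring).
  assert (Hq : (r1*r2+r3*r4)*(r1*r3+r2*r4) + (r1*r2+r3*r4)*(r1*r4+r2*r3)
               + (r1*r3+r2*r4)*(r1*r4+r2*r3) = 4*A - 4).
  { replace (4*A-4) with ((r1+r2+r3+r4)*(r1*r2*r3+r1*r2*r4+r1*r3*r4+r2*r3*r4) - 4*(r1*r2*r3*r4))
      by (rewrite v1, v3, v4; ring). ring. }
  assert (both : r1*r2+r3*r4 = c -> r1*r4+r2*r3 = c -> False).
  { intros h1 h3. apply hne. rewrite <- Hq.
    assert (h2 : r1*r3+r2*r4 = B - 2*c) by lra.
    rewrite h1, h2, h3. ring. }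
  apply Rmult_integral in Hz as [Hz|Hz]; [apply Rmult_integral in Hz as [Hz|Hz]|].
  - exfalso. assert (h1 : r1*r2+r3*r4 = c) by lra. apply both; auto.
    pose (P := PAdd (PAdd (PMul (PVar 0) (PVar 1)) (PMul (PVar 2) (PVar 3))) (PNeg (PConst c0))).
    assert (E : zpoly_eval (r1 :: r2 :: r3 :: r4 :: nil) P = 0) by (simpl; fold c; lra).
    apply hgal in E. simpl in E. fold c in E. lra.
  - lra.
  - exfalso. assert (h3 : r1*r4+r2*r3 = c) by lra. apply both; auto.
    pose (P := PAdd (PAdd (PMul (PVar 0) (PVar 3)) (PMul (PVar 1) (PVar 2))) (PNeg (PConst c0))).
    assert (E : zpoly_eval (r1 :: r2 :: r3 :: r4 :: nil) P = 0) by (simpl; fold c; lra).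
    apply hgal in E. simpl in E. fold c in E. lra.
Qed.
Theorem mainTheorem10 (s : Z) (r1 r2 r3 r4 : R)
  (hs : (Z.abs s >= 10 ^ 5)%Z)
  (hsq : is_perfect_square (3 * s ^ 2 - 4 * s + 4)%Z)
  (hsf : squarefree (s ^ 2 + 2)%Z)
  (hroots : forall t : R, Fs s t = (t - r1) * (t - r2) * (t - r3) * (t - r4))
  (hgal : cyclic_shift_is_galois r1 r2 r3 r4)
  (hlarge : Rabs r2 < Rabs r1 /\ Rabs r3 < Rabs r1 /\ Rabs r4 < Rabs r1) :
  let R' := Rabs (det3 (ln (Rabs r1)) (ln (Rabs r2)) (ln (Rabs r3))
                       (ln (Rabs r2)) (ln (Rabs r3)) (ln (Rabs r4))
                       (ln (Rabs r3)) (ln (Rabs r4)) (ln (Rabs r1))) in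
  let eps := IZR (s ^ 2 + 1) + IZR (Z.abs s) * sqrt (IZR (s ^ 2 + 2)) in
  R' = / 4 * (ln (Rabs (r1 / r3)) ^ 2 + ln (Rabs (r2 / r4)) ^ 2) * (2 * ln eps)
  /\ R' / ln eps < 9 * ln (IZR (Z.abs s)) ^ 2.
Proof.
  intros R' eps.
  set (Sr := IZR s).
  set (T := IZR (Z.abs s)).
  assert (hT : T >= 100000) by (apply IZR_ge in hs; exact hs).
  assert (hTS : T = Rabs Sr) by (apply abs_IZR).
  assert (hST : Sr = T \/ Sr = -T).
  { rewrite hTS. unfold Rabs; destruct Rcase_abs; [right|left]; lra. }
  assert (hS2 : Sr^2 = T^2) by (destruct hST as [e|e]; rewrite e; ring).
  set (A := 4*Sr^3 - 4*Sr^2 + 8*Sr - 4).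
  set (B := -6*Sr^2 - 6).
  assert (IA : IZR (4 * s ^ 3 - 4 * s ^ 2 + 8 * s - 4) = A).
  { replace (4 * s ^ 3 - 4 * s ^ 2 + 8 * s - 4)%Z with (4*s*s*s - 4*s*s + 8*s - 4)%Z by ring.
    repeat rewrite ?minus_IZR, ?plus_IZR, ?mult_IZR, ?opp_IZR. unfold A, Sr. ring. }
  assert (IB : IZR (- 6 * s ^ 2 - 6) = B).
  { replace (- 6 * s ^ 2 - 6)%Z with (- 6 * s * s - 6)%Z by ring.
    repeat rewrite ?minus_IZR, ?plus_IZR, ?mult_IZR, ?opp_IZR. unfold B, Sr. ring. }
  assert (hF : forall t, t^4 + A*t^3 + B*t^2 + 4*t + 1 = (t-r1)*(t-r2)*(t-r3)*(t-r4)).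
  { intros t. rewrite <- hroots. unfold Fs. rewrite IA, IB. ring. }
  destruct (vieta A B r1 r2 r3 r4 hF) as (v1 & v2 & v3 & v4).
  assert (root : forall r, r = r1 \/ r = r2 \/ r = r3 \/ r = r4 -> 1/(5*T) <= Rabs r <= 41/10 * T^3).
  { intros r hr. apply (root_bounds Sr T A B r hT hST); auto.
    rewrite hF. destruct hr as [e|[e|[e|e]]]; rewrite e; ring. }
  destruct (root r1 (or_introl eq_refl)) as [lb1 ub1].
  destruct (root r2 (or_intror (or_introl eq_refl))) as [lb2 ub2].
  destruct (root r3 (or_intror (or_intror (or_introl eq_refl)))) as [lb3 ub3].
  destruct (root r4 (or_intror (or_intror (or_intror eq_refl)))) as [lb4 ub4].
  assert (Ic : IZR (-2 * (s^2 + 1)) = -2*(Sr^2+1)).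
  { replace (-2 * (s^2 + 1))%Z with (-2 * (s*s + 1))%Z by ring.
    repeat rewrite ?minus_IZR, ?plus_IZR, ?mult_IZR, ?opp_IZR. unfold Sr. ring. }
  assert (q2 : r1*r3 + r2*r4 = -2*(Sr^2+1)).
  { rewrite <- Ic. apply (galois_step _ A B); auto; rewrite Ic.
    - unfold A, B. ring.
    - unfold A, B. intro E. nra. }

  set (w := sqrt (Sr^2 + 2)).
  assert (hw2 : w * w = Sr^2 + 2) by (apply sqrt_sqrt; nra).
  assert (hw0 : 0 <= w) by apply sqrt_pos.
  assert (hwT : T <= w) by nra.
  assert (Ieps : eps = Sr^2 + 1 + T * w).
  { unfold eps, w. fold T.
    replace (s^2 + 1)%Z with (s*s + 1)%Z by ring. replace (s^2 + 2)%Z with (s*s + 2)%Z by ring.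
    repeat rewrite ?minus_IZR, ?plus_IZR, ?mult_IZR, ?opp_IZR. fold Sr. replace (Sr*Sr) with (Sr^2) by ring. ring. }
  assert (heq : eps^2 - 2*(Sr^2+1)*eps + 1 = 0).
  { rewrite Ieps. replace ((Sr ^ 2 + 1 + T * w) ^ 2) with ((Sr^2+1)^2 + 2*(Sr^2+1)*T*w + T^2*(w*w)) by ring.
    rewrite hw2, <- hS2. ring. }
  assert (heps2 : 2*T^2 <= eps) by (rewrite Ieps; nra).
  assert (heps1 : 1 < eps) by nra.
  assert (hA3 : 3*T^3 <= Rabs A).
  { unfold A. destruct hST as [e|e]; rewrite e.
    - rewrite Rabs_right; nra.
    - rewrite Rabs_left; nra. }
  assert (hA4 : Rabs A <= Rabs r1 + Rabs r2 + Rabs r3 + Rabs r4).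
  { replace A with (-(r1+r2+r3+r4)) by lra. rewrite Rabs_Ropp.
    eapply Rle_trans. apply Rabs_triang.
    eapply Rle_trans. apply Rplus_le_compat_r. apply Rabs_triang.
    eapply Rle_trans. apply Rplus_le_compat_r. apply Rplus_le_compat_r. apply Rabs_triang. lra. }
  assert (hr1big : 3/4*T^3 <= Rabs r1) by lra.
  assert (hTpos : 0 < T) by lra.
  assert (hinv : 0 < 1/(5*T)) by (apply Rdiv_lt_0_compat; lra).
  assert (hU1 : 1 < Rabs r1 * Rabs r3).
  { assert (3/4*T^3 * (1/(5*T)) <= Rabs r1 * Rabs r3) by (apply Rmult_le_compat; lra).
    replace (3/4*T^3 * (1/(5*T))) with (3/20*T^2) in H by (field; lra). nra. }
  assert (hU : Rabs r1 * Rabs r3 = eps).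
  { rewrite <- Rabs_mult.
    set (u := r1*r3) in *.
    assert (hu2 : u^2 + 2*(Sr^2+1)*u + 1 = 0).
    { replace (r2*r4) with (-2*(Sr^2+1) - u) in v4 by lra.
      replace (r1*r2*r3*r4) with (u*(r2*r4)) in v4 by (unfold u; ring). nra. }
    assert (hun : u < 0) by nra.
    rewrite Rabs_left by lra.
    assert (hf : (-u - eps) * (-u + eps - 2*(Sr^2+1)) = 0) by nra.
    apply Rmult_integral in hf as [hf|hf]; [lra|].
    exfalso. rewrite <- Rabs_mult in hU1. fold u in hU1. rewrite Rabs_left in hU1 by lra.
    assert (2*(Sr^2+1) - eps <= 1) by (rewrite Ieps; nra). lra. }
  assert (hV : Rabs r2 * Rabs r4 = / eps).
  { assert (Rabs r1 * Rabs r3 * (Rabs r2 * Rabs r4) = 1).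
    { rewrite <- !Rabs_mult. replace (r1*r3*(r2*r4)) with (r1*r2*r3*r4) by ring. rewrite v4. apply Rabs_R1. }
    rewrite hU in H. field_simplify_eq; lra. }

  assert (p1 : 0 < Rabs r1) by lra. assert (p2 : 0 < Rabs r2) by lra.
  assert (p3 : 0 < Rabs r3) by lra. assert (p4 : 0 < Rabs r4) by lra.
  assert (pe : 0 < eps) by lra.
  assert (hle : 0 < ln eps) by (rewrite <- ln_1; apply ln_increasing; lra).
  assert (hl13 : ln (Rabs r1) + ln (Rabs r3) = ln eps) by (rewrite <- ln_mult, hU; auto).
  assert (hl24 : ln (Rabs r2) + ln (Rabs r4) = - ln eps)
    by (rewrite <- ln_mult, hV, ln_Rinv; auto).
  assert (hd13 : ln (Rabs (r1 / r3)) = ln (Rabs r1) - ln (Rabs r3)).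
  { unfold Rdiv. rewrite Rabs_mult, Rabs_inv, ln_mult, ln_Rinv; auto.
    apply Rinv_0_lt_compat; auto. }
  assert (hd24 : ln (Rabs (r2 / r4)) = ln (Rabs r2) - ln (Rabs r4)).
  { unfold Rdiv. rewrite Rabs_mult, Rabs_inv, ln_mult, ln_Rinv; auto.
    apply Rinv_0_lt_compat; auto. }
  assert (hR' : R' = / 4 * (ln (Rabs (r1 / r3)) ^ 2 + ln (Rabs (r2 / r4)) ^ 2) * (2 * ln eps)).
  { unfold R'. rewrite det_id by lra. rewrite Rabs_Ropp, hd13, hd24, hl13.
    apply Rabs_right. apply Rle_ge. apply Rmult_le_pos; [|lra].
    apply Rmult_le_pos; [lra|]. apply Rplus_le_le_0_compat; apply pow2_ge_0. }
  split; [exact hR'|].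
  rewrite hR', hd13, hd24.
  set (L := ln T).
  assert (hL : 0 < L) by (unfold L; rewrite <- ln_1; apply ln_increasing; lra).
  assert (h10 : Rabs r1 ^ 10 <= T^21 * eps^5).
  { apply Rle_trans with ((41/10*T^3)^10). apply pow_incr; lra.
    assert (eps^5 >= (2*T^2)^5). { apply Rle_ge, pow_incr. nra. }
    assert (0 <= T^30) by (apply pow_le; lra).
    assert (T^21 * eps^5 >= T^21 * (2*T^2)^5).
    { apply Rle_ge, Rmult_le_compat_l. apply pow_le; lra. lra. }
    replace ((41/10*T^3)^10) with ((41/10)^10 * T^30) by ring.
    replace (T^21 * (2*T^2)^5) with ((32*T) * T^30) in H1 by ring.
    assert ((41/10)^10 * T^30 <= (32*T) * T^30).
    { apply Rmult_le_compat_r; auto. simpl. lra. }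
    lra. }
  assert (ha1 : 10 * ln (Rabs r1) <= 21 * L + 5 * ln eps).
  { assert (ln (Rabs r1 ^ 10) <= ln (T^21 * eps^5)) by (apply ln_le'; auto; apply pow_lt; auto).
    rewrite ln_mult, !ln_pow in H by (try apply pow_lt; lra). simpl INR in H. unfold L. lra. }
  assert (ha0 : ln (Rabs r3) < ln (Rabs r1)) by (apply ln_increasing; lra).
  assert (hb : forall x y, 0 < x -> 0 < y -> 1/(5*T) <= y -> x * eps * y = 1 ->
            4 * (2 * ln x + ln eps) <= L).
  { intros x y hx hy hyb hxy.
    assert (hx1 : x * eps <= 5 * T).
    { assert (x * eps * (1/(5*T)) <= 1). { rewrite <- hxy. apply Rmult_le_compat_l; nra. }
      apply Rmult_le_compat_r with (r := 5*T) in H; [|lra].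
      replace (x * eps * (1 / (5 * T)) * (5 * T)) with (x*eps) in H by (field; lra). lra. }
    assert (hx2 : x^2 * eps <= 25/2).
    { assert ((x*eps)^2 <= (5*T)^2) by (apply pow_incr; nra).
      assert (25*T^2 <= 25/2 * eps) by nra.
      assert (x^2*eps*eps <= 25/2*eps) by (replace (x^2*eps*eps) with ((x*eps)^2) by ring; nra).
      apply Rmult_le_reg_r with eps; lra. }
    assert ((x^2*eps)^4 <= T).
    { apply Rle_trans with ((25/2)^4). apply pow_incr; split; [|lra].
      apply Rmult_le_pos; [apply pow_le|]; lra. simpl; lra. }
    assert (ln ((x^2*eps)^4) <= L) by (apply ln_le'; auto; apply pow_lt, Rmult_lt_0_compat; auto; apply pow_lt; auto).
    rewrite ln_pow in H0 by (apply Rmult_lt_0_compat; [apply pow_lt|]; auto).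
    rewrite ln_mult in H0 by (auto; apply pow_lt; auto).
    rewrite ln_pow in H0 by auto.
    simpl INR in H0. lra. }
  assert (hb1 := hb (Rabs r2) (Rabs r4) p2 p4 lb4 ltac:(rewrite Rmult_comm, <- Rmult_assoc, (Rmult_comm (Rabs r4)), hV; field; lra)).
  assert (hb2 := hb (Rabs r4) (Rabs r2) p4 p2 lb2 ltac:(rewrite Rmult_comm, <- Rmult_assoc, hV; field; lra)).
  set (aa := ln (Rabs r1) - ln (Rabs r3)).
  set (bb := ln (Rabs r2) - ln (Rabs r4)).
  assert (0 <= aa <= 21/5 * L) by (unfold aa; lra).
  assert (- L/4 <= bb <= L/4) by (unfold bb; lra).
  assert (aa^2 <= (21/5*L)^2) by (apply pow_incr; lra).
  assert (bb^2 <= (L/4)^2).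
  { replace (bb^2) with (Rabs bb ^ 2) by (rewrite RPow_abs; apply Rabs_right; apply Rle_ge, pow2_ge_0).
    apply pow_incr. split. apply Rabs_pos. apply Rabs_le. lra. }
  replace (/ 4 * (aa ^ 2 + bb ^ 2) * (2 * ln eps) / ln eps) with ((aa^2 + bb^2)/2) by (field; lra).
  assert (0 < L^2) by (apply pow_lt; lra).
  assert (E1 : (21/5*L)^2 = 441/25*L^2) by (clear; unfold L; field).
  assert (E2 : (L/4)^2 = 1/16*L^2) by (clear; unfold L; field).
  unfold L in *. lra.
Qed.
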